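(* (1) For $n\ge1$, the primary theta-seed $\Delta_1(\boldsymbol{\theta}_n)$ lies in $T_n$. (2) For $n\ge 3$, the secondary theta-seed $\Delta_2(\boldsymbol{\theta}_n)$ lies in $T_n$.
   Context: Let $\mathbb{Q}[\boldsymbol{\theta}_n,\boldsymbol{\xi}_n,\boldsymbol{\rho}_n]$ be the $\mathbb{Q}$-algebra generated by $3n$ pairwise anticommuting variables $\theta_i,\xi_i,\rho_i$ ($1\le i\le n$), with $\mathfrak{S}_n$ acting by permuting indices simultaneously in all three sets. For any of these variables $\alpha_j$, the derivative is defined on monomials by $\partial_{\alpha_j}(\alpha_{i_1}\cdots\alpha_{i_k}) = (-1)^{\ell-1}\alpha_{i_1}\cdots\widehat{\alpha_{i_\ell}}\cdots\alpha_{i_k}$ if the variable $\alpha_j$ equals the $\ell$-th factor, and $0$ if it does not occur, extended linearly. The space of triagonal fermionic harmonics is $T_n:=\{f : \sum_{i=1}^n\partial_{\theta_i}^h\partial_{\xi_i}^k\partial_{\rho_i}^\ell f=0 \text{ for all } h,k,\ell\ge0,\ h+k+\ell>0\}$. Define $\Delta_1(\boldsymbol{\theta}_n):=\sum_{\sigma\in\mathfrak{S}_n}\mathrm{sgn}(\sigma)\sigma(\theta_1\theta_2\cdots\theta_{n-1})$ and, for $n\ge3$, $\Delta_2(\boldsymbol{\theta}_n):=\sum_{\sigma\in\mathfrak{S}_n}\mathrm{sgn}(\sigma)\sigma\bigl((\theta_1\xi_2\rho_2+\theta_2\xi_1\rho_2+\theta_2\xi_2\rho_1)\theta_3\theta_4\cdots\theta_{n-1}\bigr)$,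 where empty products of $\theta$'s are $1$. *)

(* Defs.v *)
From HB Require Import structures.
From mathcomp Require Import all_boot all_order all_algebra all_fingroup.
Set Implicit Arguments. Unset Strict Implicit. Unset Printing Implicit Defensive.
Import GRing.Theory.
Local Open Scope ring_scope.

(* The exterior algebra Q[theta_n, xi_n, rho_n] on 3n anticommuting generators.
   A generator is a pair (c, i) : 'I_3 * 'I_n, with kind c = 0 (theta),
   1 (xi), 2 (rho), and index i (0-based: paper's index i+1).
   An element is a rational-coefficient combination of the basis monomials
   e_S (S a set of generators), e_S = product of the elements of S written in
   increasing order w.r.t. the enumeration order of the finType [var n]. *)

Definition var (n : nat) := ('I_3 * 'I_n)%type.
Definition ext (n : nat) := {ffun {set var n} -> rat^o}.

Definition kth : 'I_3 := @Ordinal 3 0 isT.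
Definition kxi : 'I_3 := @Ordinal 3 1 isT.
Definition krho : 'I_3 := @Ordinal 3 2 isT.

Definition theta n (i : 'I_n) : var n := (kth, i).
Definition xi n (i : 'I_n) : var n := (kxi, i).
Definition rho n (i : 'I_n) : var n := (krho, i).

Fixpoint inversions n (w : seq (var n)) : nat :=
  match w with
  | [::] => 0
  | x :: w' => (count (fun y => enum_rank y < enum_rank x) w' + inversions w')%N
  end.

(* the value of the word (product) x_1 x_2 ... x_k in the exterior algebra *)
Definition mono n (w : seq (var n)) : ext n :=
  if uniq w then
    ((-1) ^+ inversions w : rat) *: [ffun S : {set var n} => if S == [set x in w] then (1 : rat^o) else 0] : ext n
  else 0.

(* the derivative d_a: on a basis monomial e_S written as a_{1}...a_{k} in
   increasing order, d_a e_S = (-1)^(l-1) e_{S \ a} when a is the l-th factor,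
   and 0 if a does not occur; extended linearly. *)
Definition deriv n (a : var n) (f : ext n) : ext n :=
  [ffun T : {set var n} => if a \in T then 0
             else (-1) ^+ (index a (enum (a |: T))) * f (a |: T)].

Definition actv n (s : 'S_n) (x : var n) : var n := (x.1, s x.2).
Definition act n (s : 'S_n) (f : ext n) : ext n :=
  \sum_(S : {set var n}) (f S : rat) *: mono (map (actv s) (enum S)).

Definition triag_harmonic n (f : ext n) : Prop :=
  forall h k l : nat, (0 < h + k + l)%N ->
    \sum_(i < n) iter h (deriv (theta i)) (iter k (deriv (xi i))
                      (iter l (deriv (rho i)) f)) = 0.

(* vw c k = the one-letter word [(c, k)] when k < n (0-based index k) *)
Definition vw n (c : 'I_3) (k : nat) : seq (var n) :=
  [seq (c, i) | i <- enum 'I_n & val i == k].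

Definition thetas n (a b : nat) : seq (var n) := flatten [seq vw n kth k | k <- iota a b].

Definition Delta1 n : ext n :=
  \sum_(s : 'S_n) ((-1) ^+ s : rat) *: act s (mono (thetas n 0 n.-1)).

(* (theta_1 xi_2 rho_2 + theta_2 xi_1 rho_2 + theta_2 xi_2 rho_1) theta_3 ... theta_{n-1};
   the product of monomials is the monomial of the concatenated word *)
Definition Delta2_seed n : ext n :=
  mono (vw n kth 0 ++ vw n kxi 1 ++ vw n krho 1 ++ thetas n 2 (n - 3))
  + mono (vw n kth 1 ++ vw n kxi 0 ++ vw n krho 1 ++ thetas n 2 (n - 3))
  + mono (vw n kth 1 ++ vw n kxi 1 ++ vw n krho 0 ++ thetas n 2 (n - 3)).

Definition Delta2 n : ext n :=
  \sum_(s : 'S_n) ((-1) ^+ s : rat) *: act s (Delta2_seed n).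

(* Main.v *)
Require Import Defs.
From mathcomp Require Import all_boot all_order all_algebra all_fingroup.
From mathcomp Require Import ring.
Import Defs.
Set Implicit Arguments. Unset Strict Implicit. Unset Printing Implicit Defensive.
Import GRing.Theory.
Local Open Scope ring_scope.

Section Ext.
Variable n : nat.
Local Notation V := (var n).
Local Notation E := (ext n).

Definition rk (x : V) : nat := enum_rank x.
Definition ltr (a b : V) : bool := (rk a < rk b)%N.
Definition cnt (x : V) (S : {set V}) : nat := (\sum_(z in S) (ltr z x : nat))%N.
Definition sg (k : nat) : rat := (-1) ^+ k.

Lemma rkE x : rk x = index x (enum {: V}).
Proof.
rewrite /rk /enum_rank enum_rank_in.unlock val_insubd.
rewrite ifT // cardE index_mem mem_enum.
by [].

Qed.

Local Notation EV := (enum {: V}).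
Implicit Types (S T : {set V}) (x y a : V) (w : seq V) (f g : E).

Lemma uniq_sorted_index (X : eqType) (s : seq X) :
  uniq s -> sorted (fun p q => index p s < index q s)%N s.
Proof.
case: s => [|x0 s'] // Hu; apply/(sortedP x0) => i Hi.
by rewrite !index_uniq // ltnW.
Qed.

Lemma ltr_trans : transitive ltr.
Proof. by move=> b a c; exact: ltn_trans. Qed.

Lemma enum_sorted : sorted ltr EV.
Proof.
apply: sub_sorted (uniq_sorted_index (enum_uniq _)) => a b.
by rewrite /ltr !rkE.
Qed.

Lemma enum_set_sorted (S : {set V}) : sorted ltr (enum S).
Proof.
have -> : enum S = filter (mem S) EV by rewrite enumT.
by apply: sorted_filter; [exact: ltr_trans | exact: enum_sorted].
Qed.

Lemma sorted_inv0 s : sorted ltr s -> inversions s = 0%N.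
Proof.
elim: s => [|x s IH] //= Hs.
rewrite IH ?(path_sorted Hs) // addn0.
have Ha := order_path_min ltr_trans Hs.
rewrite (eq_in_count (a2 := pred0)) ?count_pred0 // => y Hy /=.
have := allP Ha y Hy; rewrite /ltr => H; apply/negbTE; rewrite -leqNgt ltnW //.
Qed.

Lemma sorted_index s x : sorted ltr s -> x \in s -> index x s = count (ltr^~ x) s.
Proof.
elim: s => [|y s IH] //= Hs.
have Ha := order_path_min ltr_trans Hs.
rewrite inE eq_sym; case: eqP => [Hyx|Hne] /= Hx.
  subst y; rewrite /ltr ltnn add0n (eq_in_count (a2 := pred0)) ?count_pred0 // => z Hz /=.
  have := allP Ha z Hz; rewrite /ltr => H; apply/negbTE; rewrite -leqNgt ltnW //.
rewrite IH ?(path_sorted Hs) //.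
by have := allP Ha x Hx => ->.
Qed.

Lemma cnt_count x S : cnt x S = count (ltr^~ x) (enum S).
Proof.
rewrite /cnt -sum1_count big_enum_cond big_mkcondr /=.
by apply: eq_bigr => z _; case: ltr.
Qed.

Lemma index_enum_set x S : x \in S -> index x (enum S) = cnt x S.
Proof.
by move=> Hx; rewrite cnt_count sorted_index ?mem_enum // enum_set_sorted.
Qed.

Lemma inv_enum S : inversions (enum S) = 0%N.
Proof. exact/sorted_inv0/enum_set_sorted. Qed.


Definition e0 : E := [ffun S : {set V} => if S == set0 then 1 else 0].
Definition L x g : E := [ffun S : {set V} => if x \in S then sg (cnt x S) * g (S :\ x) else 0].

Lemma scaleE (c : rat) (r : rat^o) : c *: r = c * r.
Proof. by []. Qed.

Lemma sgD p q : sg (p + q) = sg p * sg q.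
Proof. by rewrite /sg exprD. Qed.

Lemma sgS p : sg p.+1 = - sg p.
Proof. by rewrite /sg exprS mulN1r. Qed.

Lemma sg_sq p : sg p * sg p = 1.
Proof. by by rewrite -sgD /sg -signr_odd oddD addbb. Qed.

Lemma cntU1 x a S : a \notin S -> cnt x (a |: S) = (ltr a x + cnt x S)%N.
Proof. by move=> Ha; rewrite /cnt big_setU1. Qed.

Lemma cntD1 x a S : a \in S -> cnt x S = (ltr a x + cnt x (S :\ a))%N.
Proof. by move=> Ha; rewrite /cnt (big_setD1 a). Qed.

Lemma ltrr x : ltr x x = false.
Proof. by rewrite /ltr ltnn. Qed.

Lemma ltr_total x y : x != y -> ltr x y = ~~ ltr y x.
Proof.
move=> Hxy; rewrite /ltr; case: ltngtP => // H.
by case/eqP: Hxy; apply/enum_rank_inj/val_inj.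
Qed.

Lemma cnt_seq x w : uniq w -> cnt x [set z in w] = count (ltr^~ x) w.
Proof.
move=> Hw; rewrite /cnt -sum1_count big_mkcond [RHS]big_mkcond (big_uniq _ Hw) /= [RHS]big_mkcond /=.
by apply: eq_bigr => z _; rewrite inE; case: (z \in w); case: ltr.
Qed.

Lemma setw_cons x w : [set z in x :: w] = x |: [set z in w].
Proof. by apply/setP => z; rewrite !inE. Qed.

Lemma mono_nil : mono [::] = e0.
Proof.
rewrite /mono /= expr0 scale1r; apply/ffunP => S; rewrite !ffunE.
by have -> : [set x in [::]] = set0 :> {set V} by apply/setP => z; rewrite !inE.
Qed.

Lemma mono0 w : ~~ uniq w -> mono w = 0.
Proof. by rewrite /mono => /negbTE ->. Qed.

Lemma ffZ (c : rat) f S : (c *: f) S = c * f S.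
Proof. by rewrite ffunE. Qed.
Lemma ffD f g S : (f + g) S = f S + g S.
Proof. by rewrite ffunE. Qed.
Lemma ff0 S : (0 : E) S = 0.
Proof. by rewrite ffunE. Qed.
Lemma ffN f S : (- f) S = - f S.
Proof. by rewrite ffunE. Qed.

Lemma mono_cons x w : mono (x :: w) = L x (mono w).
Proof.
apply/ffunP => S; rewrite /mono /L ffunE /=.
case Hw: (uniq w); last first.
  by rewrite andbF ff0; case: (x \in S); rewrite ?ff0 ?mulr0.
case Hx: (x \in w) => /=.
  rewrite ff0; case HS: (x \in S) => //.
  rewrite ffZ ffunE; case: eqP => [H|H]; last by rewrite mulr0 mulr0.
  by move: (setD11 x S); rewrite H inE Hx.
rewrite ffZ ffunE setw_cons.
case: eqP => [->|HS].
  rewrite setU11 ffZ ffunE setU1K ?inE ?Hx // eqxx cntU1 ?inE ?Hx // ltrr add0n cnt_seq //.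
  by rewrite /sg exprD !mulr1.
case Hin: (x \in S); rewrite ?mulr0 //.
rewrite ffZ ffunE; case: eqP => [H|H]; last by rewrite !mulr0.
by case: HS; rewrite -H setD1K.
Qed.

Lemma LD x f g : L x (f + g) = L x f + L x g.
Proof.
by apply/ffunP => S; rewrite !ffunE; case: (x \in S); rewrite ?addr0 // mulrDr.
Qed.

Lemma LZ x (c : rat) g : L x (c *: g) = c *: L x g.
Proof.
apply/ffunP => S; rewrite !ffunE !scaleE; case: (x \in S); rewrite ?mulr0 //.
by rewrite ?ffunE ?scaleE mulrCA.
Qed.

Lemma L0 x : L x 0 = 0.
Proof. by apply/ffunP => S; rewrite !ffunE; case: (x \in S); rewrite ?ffunE ?mulr0. Qed.

Lemma L_anti x y g : L x (L y g) = - L y (L x g).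
Proof.
apply/ffunP => S; rewrite !ffunE.
have [<-|Hxy] := eqVneq x y.
  by case: (x \in S); rewrite ?oppr0 // ?ffunE !in_setD1 eqxx /= mulr0 oppr0.
rewrite !in_setD1 Hxy (eq_sym y x) Hxy /=.
case Hx: (x \in S); case Hy: (y \in S); rewrite /= ?mulr0 ?oppr0 //.
have -> : S :\ y :\ x = S :\ x :\ y by apply/setP => z; rewrite !inE andbCA.
rewrite (@cntD1 x y S Hy) (@cntD1 y x S Hx).
rewrite (ltr_total Hxy).
case: (ltr y x); rewrite /= ?add0n ?add1n ?sgS; set u := g _; set p := sg _; set q := sg _.
  ring.
ring.
Qed.

Lemma derivE a f T : deriv a f T = if a \in T then 0 else sg (cnt a T) * f (a |: T).
Proof.
rewrite /deriv ffunE; case Ha: (a \in T) => //.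
by rewrite index_enum_set ?setU11 // cntU1 ?Ha // ltrr.
Qed.

Lemma LE x g S : L x g S = if x \in S then sg (cnt x S) * g (S :\ x) else 0.
Proof. by rewrite ffunE. Qed.

Lemma derivD a f g : deriv a (f + g) = deriv a f + deriv a g.
Proof. by apply/ffunP => T; rewrite !derivE !ffD !derivE; case: (a \in T); rewrite ?addr0 // mulrDr. Qed.

Lemma derivZ a (c : rat) f : deriv a (c *: f) = c *: deriv a f.
Proof. by apply/ffunP => T; rewrite !derivE !ffZ !derivE; case: (a \in T); rewrite ?mulr0 // mulrCA. Qed.

Lemma deriv0 a : deriv a 0 = 0.
Proof. by apply/ffunP => T; rewrite !derivE !ff0; case: (a \in T); rewrite // mulr0. Qed.

Lemma deriv_sum a (I : Type) (r : seq I) (P : pred I) (F : I -> E) :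
  deriv a (\sum_(i <- r | P i) F i) = \sum_(i <- r | P i) deriv a (F i).
Proof.
apply/ffunP => T; rewrite derivE !sum_ffunE.
case Ha: (a \in T).
  by rewrite big1 // => i _; rewrite derivE Ha.
by rewrite mulr_sumr; apply: eq_bigr => i _; rewrite derivE Ha.
Qed.

Lemma deriv2 a f : deriv a (deriv a f) = 0.
Proof.
apply/ffunP => T; rewrite !derivE ff0; case: (a \in T) => //.
by rewrite setU11 mulr0.
Qed.

Lemma deriv_e0 a : deriv a e0 = 0.
Proof.
apply/ffunP => T; rewrite derivE ff0; case: (a \in T) => //.
rewrite ffunE; case: eqP; rewrite ?mulr0 // => H.
by move: (setU11 a T); rewrite H inE.
Qed.

Lemma deriv_L_eq a g : deriv a (L a g) = g - L a (deriv a g).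
Proof.
apply/ffunP => T; rewrite derivE ffD ffN !LE.
case Ha: (a \in T).
  rewrite derivE setD11 setD1K // (@cntD1 a a T Ha) ltrr add0n.
  by rewrite mulrA sg_sq mul1r subrr.
by rewrite setU11 setU1K ?Ha // cntU1 ?Ha // ltrr add0n mulrA sg_sq mul1r subr0.
Qed.

Lemma deriv_L_neq a x g : x != a -> deriv a (L x g) = - L x (deriv a g).
Proof.
move=> Hxa; apply/ffunP => T; rewrite derivE ffN !LE.
case Ha: (a \in T).
  case Hx: (x \in T); rewrite ?oppr0 // derivE in_setD1 eq_sym Hxa Ha /=.
  by rewrite mulr0 oppr0.
rewrite in_setU1 (negbTE Hxa) /=.
case Hx: (x \in T); rewrite ?mulr0 ?oppr0 //.
rewrite derivE in_setD1 Ha andbF.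
have -> : (a |: T) :\ x = a |: (T :\ x).
  apply/setP => z; rewrite !inE; case: (z =P a) => [->|] //=; by rewrite eq_sym Hxa.
rewrite cntU1 ?Ha // (@cntD1 a x T Hx) (ltr_total Hxa).
by case: (ltr a x); rewrite /= ?add0n ?add1n ?sgS; ring.
Qed.

Definition cf a w : rat := if a \in w then sg (index a w) else 0.

Lemma deriv_mono a w : uniq w -> deriv a (mono w) = cf a w *: mono (rem a w).
Proof.
rewrite /cf; elim: w => [|x w IH] /=.
  by rewrite mono_nil deriv_e0 scale0r.
case/andP => Hx Hw; rewrite mono_cons inE.
have [Hxa|Hxa] := eqVneq x a.
  subst x; rewrite deriv_L_eq IH // (negbTE Hx) scale0r L0 subr0 /=.
  by rewrite /sg expr0 scale1r.
rewrite deriv_L_neq // IH // LZ -mono_cons /=.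
by case: (a \in w); rewrite ?scale0r ?oppr0 // sgS scaleNr.
Qed.

Lemma mono_cat_cons u x v : mono (u ++ x :: v) = sg (size u) *: mono (x :: u ++ v).
Proof.
elim: u => [|y u IH] /=; first by rewrite /sg expr0 scale1r.
by rewrite mono_cons IH LZ mono_cons L_anti -!mono_cons sgS scaleNr scalerN.
Qed.

Lemma mono_perm w w' : perm_eq w w' ->
  exists b, mono w' = sg b *: mono w /\
            (forall F : V -> V, mono (map F w') = sg b *: mono (map F w)).
Proof.
elim: w w' => [|x w IH] w' Hp.
  move: (perm_size Hp); case: w' Hp => // _ _; exists 0%N.
  by rewrite /sg expr0 !scale1r.
have Hxw : x \in w' by rewrite -(perm_mem Hp) mem_head.
case/splitPr: Hxw Hp => u v Hp.
have Hp' : perm_eq w (u ++ v).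
  by rewrite -(perm_cons x); apply: (perm_trans Hp); rewrite -cat1s perm_catCA.
have [b [H1 H2]] := IH _ Hp'.
exists (size u + b)%N; split.
  by rewrite mono_cat_cons mono_cons H1 LZ -mono_cons scalerA sgD.
move=> F; rewrite map_cat /= mono_cat_cons size_map mono_cons -map_cat H2 LZ.
by rewrite -mono_cons scalerA sgD.
Qed.


Lemma actv_inj (s : 'S_n) : injective (actv s).
Proof. by move=> [c i] [d j] [-> /perm_inj ->]. Qed.

Lemma act_mono (s : 'S_n) w : act s (mono w) = mono (map (actv s) w).
Proof.
rewrite /act.
case Hu: (uniq w); last first.
  rewrite (mono0 (negbT Hu)) mono0; last by rewrite map_inj_uniq ?Hu //; exact: actv_inj.
  by rewrite big1 // => S _; rewrite ff0 scale0r.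
set W := [set z in w].
rewrite (bigD1 W) //= big1 ?addr0; last first.
  by move=> S HS; rewrite /mono Hu ffZ ffunE (negbTE HS) mulr0 scale0r.
have Hp : perm_eq (enum W) w.
  apply: uniq_perm; [exact: enum_uniq | exact: Hu | by move=> z; rewrite mem_enum inE].
have [b [H1 H2]] := mono_perm Hp.
rewrite H2; congr (_ *: _).
rewrite H1 ffZ /mono enum_uniq inv_enum expr0 scale1r ffunE.
have -> : [set z in enum W] = W by apply/setP => z; rewrite inE mem_enum.
by rewrite eqxx mulr1.
Qed.

Lemma act_add (s : 'S_n) f g : act s (f + g) = act s f + act s g.
Proof. by rewrite /act -big_split; apply: eq_bigr => S _; rewrite ffD scalerDl. Qed.

Lemma act3 (s : 'S_n) (u1 u2 u3 : seq V) : act s (mono u1 + mono u2 + mono u3) =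
  mono (map (actv s) u1) + mono (map (actv s) u2) + mono (map (actv s) u3).
Proof. by rewrite act_add act_add (act_mono s u1) (act_mono s u2) (act_mono s u3). Qed.

Definition A w : E := locked (\sum_(s : 'S_n) ((-1) ^+ s : rat) *: mono (map (actv s) w)).

Lemma AE w : A w = \sum_(s : 'S_n) ((-1) ^+ s : rat) *: mono (map (actv s) w).
Proof. by rewrite /A -lock. Qed.

Lemma A_act (t : 'S_n) w : A (map (actv t) w) = ((-1) ^+ t : rat) *: A w.
Proof.
rewrite /A -!lock scaler_sumr [RHS](reindex_inj (mulgI t)) /=.
apply: eq_bigr => s _; rewrite scalerA odd_permM signr_addb mulrA -signr_addb addbb expr0 mul1r.
congr (_ *: mono _); rewrite -map_comp; apply: eq_map => x /=.
by rewrite /actv /= permM.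
Qed.

Lemma A_kill w (a b : 'I_n) : a != b ->
  (forall x, x \in w -> (x.2 != a) && (x.2 != b)) -> A w = 0.
Proof.
move=> Hab H.
have Hm : map (actv (tperm a b)) w = w.
  rewrite -{2}(map_id w); apply/eq_in_map => x /H/andP[Ha Hb].
  by case: x Ha Hb => c i /= Ha Hb; rewrite /actv /= tpermD // eq_sym.
have := A_act (tperm a b) w; rewrite Hm odd_tperm Hab expr1 scaleN1r => HA.
have : (2%:R : rat) *: A w = 0 by rewrite scaler_nat mulr2n {1}HA addNr.
move/eqP. rewrite scaler_eq0 => /orP[|/eqP //]. by [].
Qed.

Definition dW (b : bool) a (p : rat * seq V) : rat * seq V :=
  if b then (p.1 * cf a p.2, rem a p.2) else p.
Definition chain (h k l : bool) (i : 'I_n) p :=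
  dW h (theta i) (dW k (xi i) (dW l (rho i) p)).

Lemma iter_dW (b : bool) a p : uniq p.2 ->
  iter b (deriv a) (p.1 *: mono p.2) = (dW b a p).1 *: mono (dW b a p).2 /\ uniq (dW b a p).2.
Proof.
case: b => //= Hu; rewrite derivZ deriv_mono // scalerA; split => //; exact: rem_uniq.
Qed.

Lemma chainE (h k l : bool) i c w : uniq w ->
  iter h (deriv (theta i)) (iter k (deriv (xi i)) (iter l (deriv (rho i)) (c *: mono w))) =
  (chain h k l i (c, w)).1 *: mono (chain h k l i (c, w)).2.
Proof.
move=> Hw.
have [E1 U1] := @iter_dW l (rho i) (c, w) Hw.
rewrite [c *: _]/(((c, w).1) *: mono (c, w).2) E1.
have [E2 U2] := @iter_dW k (xi i) _ U1.
rewrite E2.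
by have [E3 U3] := @iter_dW h (theta i) _ U2.
Qed.

Lemma rem_map (f : V -> V) a w : injective f -> rem (f a) (map f w) = map f (rem a w).
Proof.
move=> Hf; elim: w => [|y w IH] //=; rewrite (inj_eq Hf).
by case: (y == a) => //=; rewrite IH.
Qed.

Lemma dW_map b (s : 'S_n) a p :
  dW b (actv s a) (p.1, map (actv s) p.2) = ((dW b a p).1, map (actv s) (dW b a p).2).
Proof.
case: b => //=; rewrite /cf mem_map ?index_map ?rem_map //; exact: actv_inj.
Qed.

Lemma chain_map h k l (s : 'S_n) i c w :
  chain h k l (s i) (c, map (actv s) w) =
  ((chain h k l i (c, w)).1, map (actv s) (chain h k l i (c, w)).2).
Proof.
rewrite /chain.
rewrite -[rho (s i)]/(actv s (rho i)) -[xi (s i)]/(actv s (xi i)) -[theta (s i)]/(actv s (theta i)).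
rewrite -[(c, map (actv s) w)]/((c, w).1, map (actv s) (c, w).2).
by rewrite !dW_map.
Qed.

Lemma dW_scale b a c p : dW b a (c * p.1, p.2) = (c * (dW b a p).1, (dW b a p).2).
Proof. by case: b => //=; rewrite mulrA. Qed.

Lemma chain_scale h k l i c w :
  chain h k l i (c, w) = (c * (chain h k l i (1, w)).1, (chain h k l i (1, w)).2).
Proof.
have -> : (c, w) = (c * ((1:rat), w).1, ((1:rat), w).2) :> rat * seq V by rewrite /= mulr1.
rewrite /chain.
by rewrite !dW_scale.
Qed.

Definition Dsum (h k l : nat) (f : E) : E := locked (\sum_(i < n)
  iter h (deriv (theta i)) (iter k (deriv (xi i)) (iter l (deriv (rho i)) f))).

Lemma iterD_sum (b : bool) a (I : Type) (r : seq I) (P : pred I) (F : I -> E) :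
  iter b (deriv a) (\sum_(i <- r | P i) F i) = \sum_(i <- r | P i) iter b (deriv a) (F i).
Proof. by case: b => //=; rewrite deriv_sum. Qed.

Lemma Dsum_A (h k l : bool) w : uniq w ->
  Dsum h k l (A w) = \sum_(j < n) (chain h k l j (1, w)).1 *: A (chain h k l j (1, w)).2.
Proof.
move=> Hw; rewrite /Dsum /A -!lock.
under eq_bigr => i _ do rewrite !iterD_sum.
rewrite exchange_big /=.
under eq_bigr => s _ do rewrite (reindex_inj (@perm_inj _ s)) /=.
rewrite exchange_big /=; apply: eq_bigr => j _.
rewrite -lock scaler_sumr; apply: eq_bigr => s _.
rewrite chainE; last by rewrite map_inj_uniq //; exact: actv_inj.
by rewrite chain_map chain_scale /= scalerA mulrC.
Qed.


Lemma iter_deriv0 (h : nat) a : iter h (deriv a) 0 = 0.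
Proof. by elim: h => //= h ->; rewrite deriv0. Qed.

Lemma iter_deriv_big (h : nat) a g : (1 < h)%N -> iter h (deriv a) g = 0.
Proof. by case: h => [|[|h]] //= _; rewrite deriv2. Qed.

Lemma harmonic_of f : (forall h k l : bool, h || k || l -> Dsum h k l f = 0) ->
  triag_harmonic f.
Proof.
move=> H0 h k l Hpos.
have H : forall h k l : bool, h || k || l -> \sum_(i < n)
  iter h (deriv (theta i)) (iter k (deriv (xi i)) (iter l (deriv (rho i)) f)) = 0.
  by move=> h' k' l' /H0; rewrite /Dsum -lock.
have Hbig : forall h k l : nat, (1 < h)%N || (1 < k)%N || (1 < l)%N -> \sum_(i < n)
  iter h (deriv (theta i)) (iter k (deriv (xi i)) (iter l (deriv (rho i)) f)) = 0.
  move=> h' k' l' Hb; apply: big1 => i _.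
  case/orP: Hb => [/orP[]|] Hb.
  - by rewrite (iter_deriv_big _ _ Hb).
  - by rewrite (iter_deriv_big _ _ Hb) iter_deriv0.
  - by rewrite (iter_deriv_big _ _ Hb) !iter_deriv0.
case: h Hpos => [|[|h]]; case: k => [|[|k]]; case: l => [|[|l]] // Hpos;
  try (apply: Hbig; by rewrite ?orbT).
- exact: (H false false true).
- exact: (H false true false).
- exact: (H false true true).
- exact: (H true false false).
- exact: (H true false true).
- exact: (H true true false).
- exact: (H true true true).
Qed.

Lemma iterD_add (b : bool) a f g : iter b (deriv a) (f + g) = iter b (deriv a) f + iter b (deriv a) g.
Proof. by case: b => //=; rewrite derivD. Qed.

Lemma DsumD (h k l : bool) f g : Dsum h k l (f + g) = Dsum h k l f + Dsum h k l g.
Proof. by rewrite /Dsum -!lock -big_split; apply: eq_bigr => i _; rewrite !iterD_add. Qed.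

Lemma dW_sub b a p : {subset (dW b a p).2 <= p.2}.
Proof. by case: b => //= x; exact: mem_rem. Qed.

Lemma dW_zero b a p : p.1 = 0 -> (dW b a p).1 = 0.
Proof. by case: b => //= ->; rewrite mul0r. Qed.

Lemma dW_absent a p : a \notin p.2 -> (dW true a p).1 = 0.
Proof. by move=> Ha; rewrite /= /cf (negbTE Ha) mulr0. Qed.

Lemma chain_coef0 (h k l : bool) j w :
  (l && (rho j \notin w)) || (k && (xi j \notin w)) || (h && (theta j \notin w)) ->
  (chain h k l j (1, w)).1 = 0.
Proof.
rewrite /chain.
have Z1 : l && (rho j \notin w) -> (dW l (rho j) ((1:rat), w)).1 = 0.
  by case: l => [H|//]; apply: dW_absent; exact: H.
have S1 : {subset (dW l (rho j) ((1:rat), w)).2 <= w} by exact: dW_sub.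
have Z2 : k && (xi j \notin w) -> (dW k (xi j) (dW l (rho j) ((1:rat), w))).1 = 0.
  case: k => [H|//]; apply: dW_absent; apply/negP => /S1; exact/negP.
have S2 : {subset (dW k (xi j) (dW l (rho j) ((1:rat), w))).2 <= w}.
  by move=> x /dW_sub /S1.
case/orP => [/orP[]|] H.
- by apply: dW_zero; apply: dW_zero; apply: Z1.
- by apply: dW_zero; apply: Z2.
- by case: h H => [H|//]; apply: dW_absent; apply/negP => /S2; exact/negP.
Qed.

Lemma term_vanishF (F : seq V -> E)
  (HF : forall w (a b : 'I_n), a != b -> (forall x, x \in w -> (x.2 != a) && (x.2 != b)) -> F w = 0)
  (h k l : bool) (j b : 'I_n) w : uniq w -> h || k || l -> b != j ->
  (forall x, x \in w -> x.2 != b) -> (forall x, x \in w -> x.2 = j -> x = theta j) ->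
  (chain h k l j (1, w)).1 *: F (chain h k l j (1, w)).2 = 0.
Proof.
move=> Hw Hhkl Hbj Hb Hj.
have Nxi : xi j \notin w by apply/negP => /Hj /(_ erefl) [].
have Nrho : rho j \notin w by apply/negP => /Hj /(_ erefl) [].
case: l Hhkl => [|] Hhkl.
  by rewrite chain_coef0 ?scale0r //= Nrho.
case: k Hhkl => [|] Hhkl.
  by rewrite chain_coef0 ?scale0r //= Nxi.
case: h Hhkl => // _.
rewrite /chain /= (HF _ j b) ?scaler0 1?eq_sym //.
move=> x; rewrite (rem_filter _ Hw) mem_filter => /andP[Hx Hxw] /=.
rewrite (Hb _ Hxw) andbT; apply/eqP => Hxj; move/eqP: Hx; apply; exact: Hj.
Qed.

Lemma term_vanish (h k l : bool) (j b : 'I_n) w : uniq w -> h || k || l -> b != j ->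
  (forall x, x \in w -> x.2 != b) -> (forall x, x \in w -> x.2 = j -> x = theta j) ->
  (chain h k l j (1, w)).1 *: A (chain h k l j (1, w)).2 = 0.
Proof. by apply: term_vanishF => w' a b'; exact: A_kill. Qed.

End Ext.

Lemma vw_ord n (c : 'I_3) (i : 'I_n) : vw n c i = [:: (c, i)].
Proof.
rewrite /vw (eq_filter (a2 := pred1 i)) ?filter_pred1_uniq ?enum_uniq ?mem_enum //.
Qed.

Lemma mem_thetas n a b (x : var n) :
  x \in thetas n a b = (x.1 == kth) && (a <= x.2 < a + b)%N.
Proof.
rewrite /thetas; apply/flatten_mapP/idP.
  case=> k; rewrite mem_iota => Hk; rewrite /vw => /mapP [i].
  by rewrite mem_filter => /andP[/eqP Hik _] ->; apply/and3P; split => //=; rewrite Hik; case/andP: Hk.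
case: x => c i /andP[/eqP /= -> Hi]; exists (val i); first by rewrite mem_iota.
by apply/mapP; exists i; rewrite // mem_filter eqxx mem_enum.
Qed.

Lemma thetas_uniq n a b : uniq (thetas n a b).
Proof.
elim: b => [|b IH] //.
rewrite /thetas -[b.+1]addn1 iotaD map_cat flatten_cat cat_uniq -/(thetas n a b) IH /= cats0.
apply/andP; split.
  apply/hasPn => x; rewrite /vw => /mapP[i]; rewrite mem_filter => /andP[/eqP Hi _] ->.
  by rewrite mem_thetas /= Hi ltnn andbF.
rewrite map_inj_uniq; first by rewrite filter_uniq //; exact: enum_uniq.
by move=> i j [].
Qed.

Lemma Delta1_A n : Delta1 n = A (thetas n 0 n.-1).
Proof. by rewrite /Delta1 /A -lock; apply: eq_bigr => s _; rewrite act_mono. Qed.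

Lemma part1 n : (1 <= n)%N -> triag_harmonic (Delta1 n).
Proof.
case: n => [|m] // _; rewrite Delta1_A /=.
apply: harmonic_of => h k l Hhkl.
rewrite Dsum_A ?thetas_uniq //; apply: big1 => j _.
have [Hj|Hj] := eqVneq j ord_max.
  rewrite chain_coef0 ?scale0r //.
  case: l Hhkl => /=; first by rewrite mem_thetas.
  case: k => /=; first by rewrite mem_thetas.
  by case: h => //= _; rewrite mem_thetas /= Hj /= add0n ltnn.
apply: (term_vanish (b := ord_max)); [exact: thetas_uniq | done | by rewrite eq_sym | |].
  by move=> [c i]; rewrite mem_thetas /= => /andP[_ Hi]; rewrite -val_eqE /= neq_ltn Hi.
move=> [c i]; rewrite mem_thetas /= => /andP[/eqP -> _] ->; done.
Qed.

From mathcomp Require Import zify.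
Import Defs.

Section D2.
Variable m : nat.
Local Notation n := m.+3.
Local Notation V := (var n).
Definition i0 : 'I_n := ord0.
Definition i1 : 'I_n := Ordinal (isT : (1 < m.+3)%N).
Definition il : 'I_n := ord_max.
Local Notation Th := (thetas n 2 m).

Lemma cf_cat (a : V) u s : a \notin s -> cf a (u ++ s) = cf a u.
Proof.
move=> H; rewrite /cf mem_cat (negbTE H) orbF; case Hu: (a \in u) => //.
by rewrite index_cat Hu.
Qed.

Lemma rem_cat_r (a : V) u s : a \notin s -> rem a (u ++ s) = rem a u ++ s.
Proof.
move=> H; elim: u => [|x u IH] /=; first exact: rem_id.
by case: eqP => // _; rewrite IH.
Qed.

Lemma dW_cat b (a : V) c u s : a \notin s ->
  dW b a (c, u ++ s) = ((dW b a (c, u)).1, (dW b a (c, u)).2 ++ s).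
Proof. by case: b => //= H; rewrite cf_cat // rem_cat_r. Qed.

Lemma chain_cat h k l (j : 'I_n) u s :
  theta j \notin s -> xi j \notin s -> rho j \notin s ->
  chain h k l j (1, u ++ s) = ((chain h k l j (1, u)).1, (chain h k l j (1, u)).2 ++ s).
Proof.
move=> H1 H2 H3; rewrite /chain dW_cat // dW_cat // dW_cat //.
by rewrite -!surjective_pairing.
Qed.

Lemma nTh_xi j : xi j \notin Th. Proof. by rewrite mem_thetas. Qed.
Lemma nTh_rho j : rho j \notin Th. Proof. by rewrite mem_thetas. Qed.
Lemma nTh_th0 : theta i0 \notin Th. Proof. by rewrite mem_thetas. Qed.
Lemma nTh_th1 : theta i1 \notin Th. Proof. by rewrite mem_thetas. Qed.

Lemma Th_idx (x : V) : x \in Th -> [/\ x.1 = kth, (2 <= x.2)%N & (x.2 < m.+2)%N].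
Proof. by rewrite mem_thetas => /andP[/eqP -> /andP[H1 H2]]; split. Qed.

Section FA.
Variable F : seq V -> ext n.
Hypothesis HF : forall w (a b : 'I_n), a != b ->
  (forall x, x \in w -> (x.2 != a) && (x.2 != b)) -> F w = 0.

Lemma kill0 u : all (fun x : V => (x.2 != i0) && (x.2 != il)) u -> F (u ++ Th) = 0.
Proof.
move=> Hu; apply: (HF (a := i0) (b := il)) => // x.
rewrite mem_cat => /orP[/(allP Hu) //|/Th_idx [_ H1 H2]].
rewrite -!val_eqE /=; apply/andP; split; apply/eqP; lia.
Qed.

Lemma kill1 u : all (fun x : V => (x.2 != i1) && (x.2 != il)) u -> F (u ++ Th) = 0.
Proof.
move=> Hu; apply: (HF (a := i1) (b := il)) => // x.
rewrite mem_cat => /orP[/(allP Hu) //|/Th_idx [_ H1 H2]].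
rewrite -!val_eqE /=; apply/andP; split; apply/eqP; lia.
Qed.

End FA.

Lemma swapA u : A (map (actv (tperm i0 i1)) u ++ Th) = - A (u ++ Th).
Proof.
have -> : map (actv (tperm i0 i1)) u ++ Th = map (actv (tperm i0 i1)) (u ++ Th).
  rewrite map_cat; congr (_ ++ _); rewrite -{1}(map_id Th); apply/eq_in_map => x.
  move=> /Th_idx [_ H1 _]; case: x H1 => c i /= H1; rewrite /actv /= tpermD //.
    by rewrite -val_eqE /=; case: (nat_of_ord i) H1.
  by rewrite -val_eqE /=; case: (nat_of_ord i) H1 => [|[]].
by rewrite A_act odd_tperm expr1 scaleN1r.
Qed.

Lemma uniq_Th u : uniq u -> all (fun x => (x.2 == i0) || (x.2 == i1)) u -> uniq (u ++ Th).
Proof.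
move=> Hu Ha; rewrite cat_uniq Hu thetas_uniq andbT /=.
apply/hasPn => x /Th_idx [_ H1 _]; apply/negP => /(allP Ha) /orP[] /eqP Hx;
  by rewrite Hx in H1.
Qed.

Lemma rest0 (F : seq V -> ext n) (HF : forall w (a b : 'I_n), a != b ->
  (forall x, x \in w -> (x.2 != a) && (x.2 != b)) -> F w = 0) (h k l : bool) u (j : 'I_n) : uniq u ->
  all (fun x => (x.2 == i0) || (x.2 == i1)) u -> j != i0 -> j != i1 -> h || k || l ->
  (chain h k l j (1, u ++ Th)).1 *: F (chain h k l j (1, u ++ Th)).2 = 0.
Proof.
move=> Hu Ha Hj0 Hj1 Hhkl.
have Hw := uniq_Th Hu Ha.
have Hpre : forall x, x \in u -> (x.2 != j) && (x.2 != il).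
  move=> x /(allP Ha) /orP[] /eqP ->; apply/andP; split; rewrite 1?eq_sym //;
  by rewrite -val_eqE.
have [Hjl|Hjl] := eqVneq j il.
  have Nw : forall c, (c, j) \notin u ++ Th.
    move=> c; rewrite mem_cat; apply/norP; split.
      by apply/negP => /Hpre /=; rewrite Hjl eqxx andbF.
    by apply/negP => /Th_idx [_ _] /=; rewrite Hjl /= ltnn.
  rewrite chain_coef0 ?scale0r //.
  case: l Hhkl => /=; first by rewrite Nw.
  case: k => /=; first by rewrite Nw.
  by case: h => //= _; rewrite Nw.
apply: (term_vanishF HF (b := il)) => //; first by rewrite eq_sym.
  move=> x; rewrite mem_cat => /orP[/Hpre /andP[] //|/Th_idx [_ _ H]].
  by rewrite -val_eqE /= neq_ltn H.
move=> x; rewrite mem_cat => /orP[/Hpre /andP[/eqP] //|/Th_idx [H _ _] Hx].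
by case: x H Hx => c i /= -> ->.
Qed.


Lemma sum_split (F : seq V -> ext n) (HF : forall w (a b : 'I_n), a != b ->
  (forall x, x \in w -> (x.2 != a) && (x.2 != b)) -> F w = 0) (h k l : bool) u :
  uniq u -> all (fun x => (x.2 == i0) || (x.2 == i1)) u -> h || k || l ->
  \sum_(j < n) (chain h k l j (1, u ++ Th)).1 *: F (chain h k l j (1, u ++ Th)).2 =
  (chain h k l i0 (1, u ++ Th)).1 *: F (chain h k l i0 (1, u ++ Th)).2 +
  (chain h k l i1 (1, u ++ Th)).1 *: F (chain h k l i1 (1, u ++ Th)).2.
Proof.
move=> Hu Ha Hhkl.
rewrite big_ord_recl big_ord_recl big1 ?addr0; last first.
  by move=> j _; rewrite (rest0 HF) // -val_eqE.
have -> : lift ord0 (@ord0 m.+1) = i1 by apply: val_inj.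
by [].
Qed.

Definition w1 : seq V := [:: theta i0; xi i1; rho i1].
Definition w2 : seq V := [:: theta i1; xi i0; rho i1].
Definition w3 : seq V := [:: theta i1; xi i1; rho i0].
Arguments w1 : simpl never.
Arguments w2 : simpl never.
Arguments w3 : simpl never.
Arguments chain : simpl never.

Lemma Delta2_A : Delta2 n = A (w1 ++ Th) + A (w2 ++ Th) + A (w3 ++ Th).
Proof.
rewrite /Delta2 /Delta2_seed.
rewrite (vw_ord kth i0) (vw_ord kxi i1) (vw_ord krho i1).
rewrite (vw_ord kth i1) (vw_ord kxi i0) (vw_ord krho i0).
have -> : (m.+3 - 3 = m)%N by rewrite subSS subSS subSS subn0.
rewrite (AE (w1 ++ Th)) (AE (w2 ++ Th)) (AE (w3 ++ Th)).
rewrite -big_split -big_split.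
apply: eq_bigr => s _.
by rewrite act3 !scalerDr.
Qed.

Lemma part2 : triag_harmonic (Delta2 n).
Proof.
rewrite Delta2_A; apply: harmonic_of => h k l Hhkl.
have U1 : uniq (w1 ++ Th) by apply: uniq_Th.
have U2 : uniq (w2 ++ Th) by apply: uniq_Th.
have U3 : uniq (w3 ++ Th) by apply: uniq_Th.
rewrite (DsumD h k l (A (w1 ++ Th) + A (w2 ++ Th)) (A (w3 ++ Th))).
rewrite (DsumD h k l (A (w1 ++ Th)) (A (w2 ++ Th))).
have E1 := Dsum_A h k l U1.
have E2 := Dsum_A h k l U2.
have E3 := Dsum_A h k l U3.
apply: etrans (congr2 +%R (congr2 +%R E1 E2) E3) _.
move: (@A_kill m.+3) (swapA).
move: (@A m.+3) => F HF SW.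
rewrite (sum_split HF) // (sum_split HF) // (sum_split HF) //.
rewrite !chain_cat ?nTh_xi ?nTh_rho ?nTh_th0 ?nTh_th1 //.
have S1 : F [:: xi i1, rho i0 & Th] = - F [:: xi i0, rho i1 & Th].
  by rewrite -(SW [:: xi i0; rho i1]) /= /actv /= tpermL tpermR.
have S2 : F [:: theta i1, rho i0 & Th] = - F [:: theta i0, rho i1 & Th].
  by rewrite -(SW [:: theta i0; rho i1]) /= /actv /= tpermL tpermR.
have S3 : F [:: theta i1, xi i0 & Th] = - F [:: theta i0, xi i1 & Th].
  by rewrite -(SW [:: theta i0; xi i1]) /= /actv /= tpermL tpermR.
have sg0 : sg 0 = 1 by [].
have sg1 : sg 1 = -1 by rewrite /sg expr1.
have sg2 : sg 2 = 1 by rewrite /sg expr2 mulN1r opprK.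
clear E1 E2 E3; case: h Hhkl; case: k; case: l => // _; rewrite /chain /dW /w1 /w2 /w3 /cf /=.
all: rewrite ?sg0 ?sg1 ?sg2 ?mul1r ?mulr1 ?mulr0 ?mul0r ?scale0r ?add0r ?addr0 ?scale1r ?scaleN1r.
all: rewrite ?(kill0 HF (u := [:: xi i1; rho i1])) ?(kill1 HF (u := [:: rho i0]))
  ?(kill1 HF (u := [:: xi i0])) ?(kill1 HF (u := [:: theta i0]))
  ?(kill0 HF (u := [:: theta i1; rho i1])) ?(kill0 HF (u := [:: theta i1; xi i1])) ?S1 ?S2 ?S3 //.
all: rewrite ?addr0 ?add0r ?oppr0 ?scaler0 //.
all: by rewrite ?addr0 ?opprK ?subrr ?addNr.
Qed.
End D2.

Theorem proposition4p4 :
  (forall n : nat, (1 <= n)%N -> triag_harmonic (Delta1 n)) /\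
  (forall n : nat, (3 <= n)%N -> triag_harmonic (Delta2 n)).
Proof.
split; first exact: part1.
by case=> [|[|[|m]]] // _; exact: part2.
Qed.
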